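(* Let $R$ be an associative ring with unity and let $\mathbf{K}=(K,\leq_p)$ be an AEC with $K$ a class of left $R$-modules closed under direct sums, pure submodules and pure epimorphic images. If $M_1,M_2,N\in K$ with $M_1,M_2\leq_p N$, then there are $M_1',M_0\in K$ such that $M_0\leq_p M_1'\leq_p N$, $M_0\leq_p M_2$, $M_1\leq_p M_1'$, $\|M_0\|\leq\|M_1\|+|R|+\aleph_0$, and $M_1'\mathop{\perp}^{N}_{M_0}M_2$.
   Context: $\leq_p$ is the pure submodule relation; a pure epimorphism is a surjective homomorphism with pure kernel. An AEC $(K,\leq_p)$: closed under isomorphism and unions of $\leq_p$-chains, with a Löwenheim–Skolem number. For $M_0,M_1',M_2,N\in K$ with $M_0\leq_p M_1',M_2\leq_p N$, write $M_1'\mathop{\perp}^N_{M_0}M_2$ if the homomorphism $t:(M_1'\oplus M_2)/\{(m,-m):m\in M_0\}\to N$, $t([(a,b)])=a+b$ (the canonical map from the pushout in $R$-Mod of the inclusions $M_0\hookrightarrow M_1'$, $M_0\hookrightarrow M_2$ to $N$), is a pure embedding (injective with pure image). *)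

(* Defs.v *)
(* R : pzRingType (associative ring with 1, possibly the zero ring),
   left R-modules are lmodType R. *)
From HB Require Import structures.
From mathcomp Require Import all_boot all_algebra.
From Stdlib Require List.
Set Implicit Arguments. Unset Strict Implicit. Unset Printing Implicit Defensive.
Import GRing.Theory.
Local Open Scope ring_scope.

Section Defs.
Variable R : pzRingType.

Definition is_linear (M N : lmodType R) (f : M -> N) : Prop :=
  forall (a : R) (x y : M), f (a *: x + y) = a *: f x + f y.

Definition is_submod (M : lmodType R) (S : M -> Prop) : Prop :=
  S 0 /\ (forall (a : R) (x y : M), S x -> S y -> S (a *: x + y)).

Definition pure_in (M : lmodType R) (S T : M -> Prop) : Prop :=
  (forall x, S x -> T x) /\
  forall (m n : nat) (A : 'I_m -> 'I_n -> R) (b : 'I_m -> M),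
    (forall i, S (b i)) ->
    (exists x : 'I_n -> M, (forall j, T (x j)) /\
        forall i, \sum_(j < n) A i j *: x j = b i) ->
    exists x : 'I_n -> M, (forall j, S (x j)) /\
        forall i, \sum_(j < n) A i j *: x j = b i.

Definition pure_sub (M : lmodType R) (S : M -> Prop) : Prop :=
  is_submod S /\ pure_in S (fun _ => True).

Definition K_sub (K : lmodType R -> Prop) (N : lmodType R) (S : N -> Prop) : Prop :=
  exists (M : lmodType R) (f : M -> N),
    is_linear f /\ injective f /\ K M /\ forall y, S y <-> exists x, f x = y.

Definition is_AEC (K : lmodType R -> Prop) : Prop :=
  (forall (M N : lmodType R) (f : M -> N),
      is_linear f -> bijective f -> K M -> K N) /\
  (* Tarski-Vaught chain axiom: a module that is the union of a
     chain of pure submodules belonging to K belongs to K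
     (pure-ness of chain members in each other / in the union and the
     coherence axiom hold automatically for <=_p) *)
  (forall (N : lmodType R) (I : Type) (S : I -> N -> Prop),
      (forall i, pure_sub (S i) /\ K_sub K (S i)) ->
      (forall i j, (forall x, S i x -> S j x) \/ (forall x, S j x -> S i x)) ->
      (forall x : N, exists i, S i x) ->
      K N) /\
  (* Loewenheim-Skolem number: a cardinal L >= |R| + aleph_0 *)
  (exists L : Type, (exists g : (R + nat)%type -> L, injective g) /\
      forall N : lmodType R, K N -> forall A : N -> Prop,
        exists S : N -> Prop, pure_sub S /\ K_sub K S /\
          (forall x, A x -> S x) /\
          exists h : {x | S x} -> ({x | A x} + L)%type, injective h).

Definition internal_dsum (N : lmodType R) (I : Type) (S : I -> N -> Prop) : Prop :=
  (forall x : N, exists (s : seq I) (v : I -> N),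
      (forall i, S i (v i)) /\ x = \sum_(i <- s) v i) /\
  (forall (s : seq I) (v : I -> N), List.NoDup s -> (forall i, S i (v i)) ->
      \sum_(i <- s) v i = 0 -> forall i, List.In i s -> v i = 0).

Definition closed_dsum (K : lmodType R -> Prop) : Prop :=
  forall (N : lmodType R) (I : Type) (S : I -> N -> Prop),
    (forall i, is_submod (S i) /\ K_sub K (S i)) -> internal_dsum S -> K N.

Definition closed_puresub (K : lmodType R -> Prop) : Prop :=
  forall (N : lmodType R) (S : N -> Prop), K N -> pure_sub S -> K_sub K S.

Definition closed_pureepi (K : lmodType R -> Prop) : Prop :=
  forall (M N : lmodType R) (f : M -> N), is_linear f ->
    (forall y, exists x, f x = y) -> pure_sub (fun x => f x = 0) -> K M -> K N.

(* M1' ⊥^N_{M0} M2 : the canonical map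
   t : (M1' ⊕ M2)/{(m,-m) : m in M0} -> N, [(a,b)] |-> a + b
   is injective and has pure image (all inside N). *)
Definition indep (N : lmodType R) (M0 M1' M2 : N -> Prop) : Prop :=
  (forall a a' b b', M1' a -> M1' a' -> M2 b -> M2 b' ->
     a + b = a' + b' -> exists m, M0 m /\ a - a' = m /\ b - b' = - m) /\
  pure_in (fun y => exists a b, M1' a /\ M2 b /\ y = a + b) (fun _ => True).

End Defs.

(* Main.v *)
Require Import Defs.
From HB Require Import structures.
From mathcomp Require Import all_boot all_algebra.
From mathcomp Require boolp classical_sets.
From mathcomp Require Import zify.
From Stdlib Require Import ClassicalEpsilon Classical.
Set Implicit Arguments. Unset Strict Implicit. Unset Printing Implicit Defensive.

Lemma chain_choose {I U V : Type} (v0 : V) (A : I -> Prop) (dom : I -> U -> Prop)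
  (fn : I -> U -> V)
  (agree : forall i j u, A i -> A j -> dom i u -> dom j u -> fn i u = fn j u)
  i u : A i -> dom i u ->
  epsilon (inhabits v0) (fun v => exists j, A j /\ dom j u /\ fn j u = v) = fn i u.
Proof.
move=> Ai di.
have [j [Aj [dj <-]]] : exists j, A j /\ dom j u /\
   fn j u = epsilon (inhabits v0) (fun v => exists j, A j /\ dom j u /\ fn j u = v).
  by apply: (epsilon_spec (inhabits v0) (fun v => exists j, A j /\ dom j u /\ fn j u = v)); exists (fn i u), i.
exact: agree.
Qed.

Section Pairing.
Variables (X : Type) (iota : nat -> X) (iota_inj : injective iota).

Record PR := { PB : X -> Prop; Pf : X -> X -> X;
  PBi : forall n, PB (iota n);
  PfB : forall x y, PB x -> PB y -> PB (Pf x y);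
  Pfinj : forall x y x' y', PB x -> PB y -> PB x' -> PB y' -> Pf x y = Pf x' y' -> x = x' /\ y = y' }.

Definition lePR (p q : PR) := (forall x, PB p x -> PB q x) /\
   (forall x y, PB p x -> PB p y -> Pf p x y = Pf q x y).

Definition invi (x : X) : nat := epsilon (inhabits 0%N) (fun n => x = iota n).
Lemma inviK n : invi (iota n) = n.
Proof.
apply: iota_inj; rewrite /invi.
by symmetry; apply: (epsilon_spec (inhabits 0%N) (fun m => iota n = iota m)); exists n.
Qed.

Definition PR0 : PR.
refine (@Build_PR (fun x => exists n, x = iota n)
  (fun x y => iota (pickle (invi x, invi y))) _ _ _).
- by move=> n; exists n.
- by move=> x y _ _; eexists.
- move=> x y x' y' [a ->] [b ->] [c ->] [d ->] /iota_inj /(pcan_inj pickleK).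
  by rewrite !inviK => -[-> ->].
Defined.

Lemma PR_zorn : exists t : PR, forall s, lePR t s -> lePR s t.
Proof.
have refl : forall p, boolp.asbool (lePR p p) by move=> p; apply/boolp.asboolP; split.
have trans : forall p q r, boolp.asbool (lePR p q) -> boolp.asbool (lePR q r) -> boolp.asbool (lePR p r).
  move=> p q r /boolp.asboolP [h1 h2] /boolp.asboolP [h3 h4]; apply/boolp.asboolP; split.
    by move=> x /h1 /h3.
  by move=> x y bx byy; rewrite h2 // h4 //; apply: h1.
suff chain : forall A, classical_sets.total_on A (fun p q => boolp.asbool (lePR p q)) ->
   exists t, forall s, A s -> boolp.asbool (lePR s t).
  have [t Ht] := classical_sets.ZL_preorder PR0 refl trans chain.
  by exists t => s /boolp.asboolP /Ht /boolp.asboolP.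
move=> A Atot.
have tot : forall p q, A p -> A q -> lePR p q \/ lePR q p.
  by move=> p q Ap Aq; case: (Atot p q Ap Aq) => /boolp.asboolP; auto.
case: (classic (exists p, A p)) => [[p0 Ap0]|nA]; last first.
  by exists PR0 => s As; case: nA; exists s.
pose Bu x := exists p, A p /\ PB p x.
pose fu x y := epsilon (inhabits (iota 0)) (fun v => exists j, A j /\
   (fun j (u : X * X) => PB j u.1 /\ PB j u.2) j (x, y) /\ (fun j (u : X * X) => Pf j u.1 u.2) j (x, y) = v).
have fuE : forall p x y, A p -> PB p x -> PB p y -> fu x y = Pf p x y.
  move=> p x y Ap bx byy.
  rewrite /fu (@chain_choose PR (X * X) X (iota 0) A (fun j u => PB j u.1 /\ PB j u.2)
     (fun j u => Pf j u.1 u.2) _ p (x, y)) //.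
  move=> i j [u1 u2] Ai Aj /= [b1 b2] [b3 b4].
  by case: (tot i j Ai Aj) => [[_ h]|[_ h]]; rewrite h.
have two : forall p q, A p -> A q -> exists r, A r /\ (forall x, PB p x -> PB r x) /\ (forall x, PB q x -> PB r x).
  move=> p q Ap Aq; case: (tot p q Ap Aq) => [[h _]|[h _]].
    by exists q; split.
  by exists p; split.
have BuI : forall n, Bu (iota n) by move=> n; exists p0; split => //; apply: PBi.
have BufB : forall x y, Bu x -> Bu y -> Bu (fu x y).
  move=> x y [p [Ap bx]] [q [Aq byy]].
  have [r [Ar [hp hq]]] := two p q Ap Aq.
  by exists r; split => //; rewrite (fuE r) //; [apply: PfB; auto| auto | auto].
have Buinj : forall x y x' y', Bu x -> Bu y -> Bu x' -> Bu y' -> fu x y = fu x' y' -> x = x' /\ y = y'.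
  move=> x y x' y' [p1 [A1 b1]] [p2 [A2 b2]] [p3 [A3 b3]] [p4 [A4 b4]].
  have [r1 [Ar1 [h1 h2]]] := two p1 p2 A1 A2.
  have [r2 [Ar2 [h3 h4]]] := two p3 p4 A3 A4.
  have [r [Ar [h5 h6]]] := two r1 r2 Ar1 Ar2.
  rewrite (fuE r) ?(fuE r x') //; try by auto.
  by apply: Pfinj; auto.
exists (Build_PR BuI BufB Buinj) => s As; apply/boolp.asboolP; split => /=.
  by move=> x bx; exists s.
by move=> x y bx byy; rewrite (fuE s).
Qed.


Section PG.
Variable B : X -> Prop.
Record PG := { GD : X -> Prop; Gg : X -> X;
  GDs : forall x, GD x -> ~ B x;
  GgB : forall x, GD x -> B (Gg x);
  Ginj : forall x x', GD x -> GD x' -> Gg x = Gg x' -> x = x' }.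

Definition lePG (p q : PG) := (forall x, GD p x -> GD q x) /\
   (forall x, GD p x -> Gg p x = Gg q x).

Definition PG0 : PG.
refine (@Build_PG (fun _ => False) id _ _ _); done.
Defined.

Lemma PG_zorn : exists t : PG, forall s, lePG t s -> lePG s t.
Proof.
have refl : forall p, boolp.asbool (lePG p p) by move=> p; apply/boolp.asboolP; split.
have trans : forall p q r, boolp.asbool (lePG p q) -> boolp.asbool (lePG q r) -> boolp.asbool (lePG p r).
  move=> p q r /boolp.asboolP [h1 h2] /boolp.asboolP [h3 h4]; apply/boolp.asboolP; split.
    by move=> x /h1 /h3.
  by move=> x bx; rewrite h2 // h4 //; apply: h1.
suff chain : forall A, classical_sets.total_on A (fun p q => boolp.asbool (lePG p q)) ->
   exists t, forall s, A s -> boolp.asbool (lePG s t).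
  have [t Ht] := classical_sets.ZL_preorder PG0 refl trans chain.
  by exists t => s /boolp.asboolP /Ht /boolp.asboolP.
move=> A Atot.
have tot : forall p q, A p -> A q -> lePG p q \/ lePG q p.
  by move=> p q Ap Aq; case: (Atot p q Ap Aq) => /boolp.asboolP; auto.
pose Du x := exists p, A p /\ GD p x.
pose gu x := epsilon (inhabits (iota 0)) (fun v => exists j, A j /\ GD j x /\ Gg j x = v).
have guE : forall p x, A p -> GD p x -> gu x = Gg p x.
  move=> p x Ap bx.
  rewrite /gu (@chain_choose PG X X (iota 0) A GD Gg _ p x) //.
  move=> i j u Ai Aj b1 b2.
  by case: (tot i j Ai Aj) => [[_ h]|[_ h]]; rewrite h.
have two : forall p q, A p -> A q -> exists r, A r /\ (forall x, GD p x -> GD r x) /\ (forall x, GD q x -> GD r x).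
  move=> p q Ap Aq; case: (tot p q Ap Aq) => [[h _]|[h _]].
    by exists q; split.
  by exists p; split.
have Dus : forall x, Du x -> ~ B x by move=> x [p [_ /GDs]].
have guB : forall x, Du x -> B (gu x) by move=> x [p [Ap dx]]; rewrite (guE p) //; apply: GgB.
have guinj : forall x x', Du x -> Du x' -> gu x = gu x' -> x = x'.
  move=> x x' [p1 [A1 b1]] [p2 [A2 b2]].
  have [r [Ar [h1 h2]]] := two p1 p2 A1 A2.
  rewrite (guE r) ?(guE r x') //; try by auto.
  by apply: Ginj; auto.
exists (Build_PG Dus guB guinj) => s As; apply/boolp.asboolP; split => /=.
  by move=> x bx; exists s.
by move=> x bx; rewrite (guE s).
Qed.
End PG.

Lemma pairing : exists P : X -> X -> X, forall a b a' b', P a b = P a' b' -> a = a' /\ b = b'.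
Proof.
have [t Ht] := PR_zorn.
have [u Hu] := PG_zorn (PB t).
case: (classic (exists x0, ~ PB t x0 /\ ~ GD u x0)) => [[x0 [nB nD]]|all]; last first.
  have allD : forall x, ~ PB t x -> GD u x.
    by move=> x nx; apply: NNPP => nd; apply: all; exists x.
  pose sig x := if excluded_middle_informative (PB t x) then Pf t x (iota 0)
                else Pf t (Gg u x) (iota 1).
  have sigB : forall x, PB t (sig x).
    move=> x; rewrite /sig; case: excluded_middle_informative => bx; apply: PfB => //; try exact: PBi.
    by apply: GgB; apply: allD.
  have siginj : forall x x', sig x = sig x' -> x = x'.
    move=> x x'; rewrite /sig.
    case: excluded_middle_informative => bx; case: excluded_middle_informative => bx' /= h.
    - by have [] := Pfinj bx (@PBi _ _) bx' (@PBi _ _) h.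
    - have [_ /iota_inj] := Pfinj bx (@PBi _ _) (GgB (allD _ bx')) (@PBi _ _) h; done.
    - have [_ /iota_inj] := Pfinj (GgB (allD _ bx)) (@PBi _ _) bx' (@PBi _ _) h; done.
    - have [h1 _] := Pfinj (GgB (allD _ bx)) (@PBi _ _) (GgB (allD _ bx')) (@PBi _ _) h.
      exact: Ginj (allD _ bx) (allD _ bx') h1.
  exists (fun a b => Pf t (sig a) (sig b)) => a b a' b' h.
  have [h1 h2] := Pfinj (sigB a) (sigB b) (sigB a') (sigB b') h.
  by split; apply: siginj.
have onto : forall b, PB t b -> exists d, GD u d /\ Gg u d = b.
  move=> b bb; apply: NNPP => nex.
  pose D' x := GD u x \/ x = x0.
  pose g' x := if excluded_middle_informative (x = x0) then b else Gg u x.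
  have D's : forall x, D' x -> ~ PB t x by move=> x [/GDs|->].
  have g'B : forall x, D' x -> PB t (g' x).
    move=> x dx; rewrite /g'; case: excluded_middle_informative => // nx.
    by case: dx => // dx; apply: GgB.
  have g'inj : forall x x', D' x -> D' x' -> g' x = g' x' -> x = x'.
    move=> x x' dx dx'; rewrite /g'.
    case: excluded_middle_informative => ex; case: excluded_middle_informative => ex' /= h.
    - by rewrite ex ex'.
    - case: dx' => // dx'; case: nex; exists x'; by split.
    - case: dx => // dx; case: nex; exists x; by split.
    - case: dx => // dx; case: dx' => // dx'; exact: Ginj h.
  have le1 : lePG u (Build_PG D's g'B g'inj).
    split => /= x dx; first by left.
    rewrite /g'; case: excluded_middle_informative => // ex.
    by case: nD; rewrite -ex.
  have [/= h _] := Hu _ le1.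
  by case: nD; apply: h; right.
pose ginv b := epsilon (inhabits (iota 0)) (fun d => GD u d /\ Gg u d = b).
have ginvP : forall b, PB t b -> GD u (ginv b) /\ Gg u (ginv b) = b.
  by move=> b bb; apply: (epsilon_spec (inhabits (iota 0)) (fun d => GD u d /\ Gg u d = b)); apply: onto.
pose B' x := PB t x \/ GD u x.
pose h x := if excluded_middle_informative (PB t x) then x else Gg u x.
have hB : forall x, B' x -> PB t (h x).
  by move=> x bx; rewrite /h; case: excluded_middle_informative => // nx; case: bx => // bx; apply: GgB.
pose tg x y := if excluded_middle_informative (PB t x) then 0%N
               else if excluded_middle_informative (PB t y) then 1%N else 2%N.
pose f' x y := if excluded_middle_informative (PB t x /\ PB t y) then Pf t x y
   else ginv (Pf t (Pf t (h x) (h y)) (iota (tg x y))).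
have fnew : forall x y, B' x -> B' y -> PB t (Pf t (Pf t (h x) (h y)) (iota (tg x y))).
  by move=> x y bx byy; apply: PfB; [apply: PfB; apply: hB|apply: PBi].
have f'B : forall x y, B' x -> B' y -> B' (f' x y).
  move=> x y bx byy; rewrite /f'; case: excluded_middle_informative => [[b1 b2]|nb].
    by left; apply: PfB.
  by right; apply: (ginvP _ (fnew x y bx byy)).1.
have f'inj : forall x y x' y', B' x -> B' y -> B' x' -> B' y' -> f' x y = f' x' y' -> x = x' /\ y = y'.
  move=> x y x' y' bx byy bx' byy'; rewrite /f'.
  case: excluded_middle_informative => [[b1 b2]|nb]; case: excluded_middle_informative => [[b3 b4]|nb'] /= e.
  - exact: Pfinj e.
  - have := (ginvP _ (fnew x' y' bx' byy')).1; rewrite -e => /GDs; case; exact: PfB.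
  - have := (ginvP _ (fnew x y bx byy)).1; rewrite e => /GDs; case; exact: PfB.
  - have e2 : Pf t (Pf t (h x) (h y)) (iota (tg x y)) = Pf t (Pf t (h x') (h y')) (iota (tg x' y')).
      by rewrite -(ginvP _ (fnew x y bx byy)).2 -(ginvP _ (fnew x' y' bx' byy')).2 e.
    have [e3 /iota_inj e4] := Pfinj (PfB (hB _ bx) (hB _ byy)) (@PBi _ _) (PfB (hB _ bx') (hB _ byy')) (@PBi _ _) e2.
    have [e5 e6] := Pfinj (hB _ bx) (hB _ byy) (hB _ bx') (hB _ byy') e3.
    have hinj : forall a a', B' a -> B' a' -> (PB t a <-> PB t a') -> h a = h a' -> a = a'.
      move=> a a' ba ba' iff; rewrite /h.
      case: excluded_middle_informative => pa; case: excluded_middle_informative => pa' //= ea.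
      - by case: pa'; apply/iff.
      - by case: pa; apply/iff.
      - by case: ba => // ba; case: ba' => // ba'; apply: Ginj ea.
    have tgE : forall a b a' b', ~ (PB t a /\ PB t b) -> ~ (PB t a' /\ PB t b') ->
        tg a b = tg a' b' -> (PB t a <-> PB t a') /\ (PB t b <-> PB t b').
      move=> a b a' b' n1 n2; rewrite /tg.
      case: (excluded_middle_informative (PB t a)) => pa;
      case: (excluded_middle_informative (PB t b)) => pb;
      case: (excluded_middle_informative (PB t a')) => pa';
      case: (excluded_middle_informative (PB t b')) => pb' /= ee; try discriminate; tauto.
    have [i1 i2] := tgE _ _ _ _ nb nb' e4.
    by split; apply: hinj.
pose t' := @Build_PR B' f' (fun n => or_introl (@PBi t n)) f'B f'inj.
have le1 : lePR t t'.
  split => /= x; first by left.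
  move=> y bx byy; rewrite /f'; case: excluded_middle_informative => [_|nh] //=; by case: nh.
have [/= hh _] := Ht _ le1.
have [d [dd _]] := onto _ (@PBi t 0).
by exfalso; apply: (GDs dd); apply: hh; right.
Qed.

End Pairing.

Import GRing.Theory.
Local Open Scope ring_scope.

Definition ext (T : Type) (m : nat) (f : 'I_m -> T) (d : T) (k : nat) : T :=
  odflt d (omap f (insub k)).
Lemma extE (T : Type) (m : nat) (f : 'I_m -> T) d (i : 'I_m) : ext f d (val i) = f i.
Proof. by rewrite /ext valK. Qed.

Section Mod.
Variables (R : pzRingType) (N : lmodType R) (M1 M2 : N -> Prop).

Definition cond (k : nat) (mat : seq R) (n : nat) (b : seq N) (x : nat -> N) : Prop :=
  match k with
  | 0%N => forall i, (i < size b)%N -> \sum_(j < n) nth 0 mat (i * n + j)%N *: x j - nth 0 b i = 0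
  | 1%N => (forall j, (j < n)%N -> M2 (x j)) /\
         forall i, (i < size b)%N -> \sum_(j < n) nth 0 mat (i * n + j)%N *: x j - nth 0 b i = 0
  | _ => forall i, (i < size b)%N -> M2 (\sum_(j < n) nth 0 mat (i * n + j)%N *: x j - nth 0 b i)
  end.

Definition condO (k : nat) m n (Am : 'I_m -> 'I_n -> R) (b : 'I_m -> N) (x : 'I_n -> N) : Prop :=
  match k with
  | 0%N => forall i, \sum_(j < n) Am i j *: x j - b i = 0
  | 1%N => (forall j, M2 (x j)) /\ forall i, \sum_(j < n) Am i j *: x j - b i = 0
  | _ => forall i, M2 (\sum_(j < n) Am i j *: x j - b i)
  end.

Definition sol k mat n b : nat -> N := epsilon (inhabits (fun _ => 0)) (cond k mat n b).

Inductive code : Type :=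
| CBase of {x : N | M1 x}
| CLin of R & code & code
| CNil
| CCons of code & code
| CWit of nat & seq R & nat & code & nat.

Fixpoint ev (c : code) : seq N :=
  match c with
  | CBase x => [:: sval x]
  | CLin r c1 c2 => [:: r *: head 0 (ev c1) + head 0 (ev c2)]
  | CNil => [::]
  | CCons c1 c2 => head 0 (ev c1) :: ev c2
  | CWit k mat n args j => [:: sol k mat n (ev args) j]
  end.

Definition A (y : N) := exists c, y = head 0 (ev c).

Lemma ev_foldr (s : seq code) : ev (foldr CCons CNil s) = map (fun c => head 0 (ev c)) s.
Proof. by elim: s => //= c s ->. Qed.

Lemma solve k m n (Am : 'I_m -> 'I_n -> R) (b : 'I_m -> N) :
  (forall i, A (b i)) -> (exists x, condO k Am b x) ->
  exists y, (forall j, A (y j)) /\ condO k Am b y.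
Proof.
move=> Ab [x Hx].
have [cb Hcb] := ClassicalEpsilon.choice (fun i c => b i = head 0 (ev c)) Ab.
pose args := foldr CCons CNil (mkseq (ext cb CNil) m).
have sz : size (ev args) = m by rewrite ev_foldr size_map size_mkseq.
have nb : forall i : 'I_m, nth 0 (ev args) i = b i.
  move=> i; rewrite ev_foldr (nth_map CNil) ?size_mkseq // nth_mkseq // extE.
  by rewrite -Hcb.
pose mat := mkseq (fun k => ext (fun i => ext (Am i) 0 (k %% n)%N) 0 (k %/ n)%N) (m * n).
have nm : forall (i : 'I_m) (j : 'I_n), nth 0 mat (i * n + j)%N = Am i j.
  move=> i j; have ltj := ltn_ord j; have lti := ltn_ord i.
  rewrite nth_mkseq; last by nia.
  have n0 : (0 < n)%N by lia.
  rewrite divnMDl // modnMDl divn_small // modn_small // addn0 !extE //.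
have equiv : forall z : nat -> N, cond k mat n (ev args) z <-> condO k Am b (fun j => z (val j)).
  move=> z.
  have sumE : forall i : 'I_m, \sum_(j < n) nth 0 mat (i * n + j)%N *: z j - nth 0 (ev args) i
       = \sum_(j < n) Am i j *: z j - b i.
    by move=> i; rewrite nb; congr (_ - _); apply: eq_bigr => j _; rewrite nm.
  have fa : forall P : nat -> Prop, (forall i, (i < size (ev args))%N -> P i) <-> (forall i : 'I_m, P i).
    move=> P; rewrite sz; split; first by move=> h i; apply: h.
    by move=> h i lti; apply: (h (Ordinal lti)).
  case: k Hx => [|[|k]] Hx /=.
  - split => h i.
      by move: (h i); rewrite sz sumE => /(_ (ltn_ord i)).
    by rewrite sz => lti; have := h (Ordinal lti); rewrite -sumE.
  - split => -[h1 h2]; split.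
    + by move=> j; apply: h1.
    + by move=> i; move: (h2 i); rewrite sz sumE => /(_ (ltn_ord i)).
    + by move=> j ltj; apply: (h1 (Ordinal ltj)).
    + by move=> i; rewrite sz => lti; have := h2 (Ordinal lti); rewrite -sumE.
  - split => h i.
      by move: (h i); rewrite sz sumE => /(_ (ltn_ord i)).
    by rewrite sz => lti; have := h (Ordinal lti); rewrite -sumE.
have xE : (fun j : 'I_n => ext x 0 (val j)) = x.
  by apply: boolp.funext => j; rewrite extE.
have ex : exists z, cond k mat n (ev args) z by exists (ext x 0); apply/equiv; rewrite xE.
have := epsilon_spec (inhabits (fun _ => 0)) (cond k mat n (ev args)) ex.
move=> /equiv hs.
exists (fun j => sol k mat n (ev args) (val j)); split => // j.
by exists (CWit k mat n args (val j)).
Qed.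

Hypotheses (Hp1 : pure_sub M1) (Hp2 : pure_sub M2).

Lemma sub_closed (S : N -> Prop) x y : is_submod S -> S x -> S y -> S (x - y).
Proof.
move=> [_ h] sx sy; have := h (-1) y x sy sx.
by rewrite scaleN1r addrC.
Qed.

Lemma add_closed (S : N -> Prop) x y : is_submod S -> S x -> S y -> S (x + y).
Proof. by move=> [_ h] sx sy; have := h 1 x y sx sy; rewrite scale1r. Qed.

Lemma M1_A x : M1 x -> A x.
Proof. by move=> hx; exists (CBase (exist _ x hx)). Qed.

Lemma A_sub : is_submod A.
Proof.
split; first by apply: M1_A; case: Hp1 => -[].
by move=> a x y [cx ->] [cy ->]; exists (CLin a cx cy).
Qed.

Lemma pure_in_mono (S T : N -> Prop) : pure_in S (fun _ => True) -> (forall x, S x -> T x) -> pure_in S T.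
Proof.
move=> [_ h] ST; split => // m n Am b Sb [x [_ hx]].
by apply: h => //; exists x.
Qed.

Lemma eqE (x y : N) : x - y = 0 <-> x = y.
Proof. by split => [/eqP|->]; [rewrite subr_eq0 => /eqP|rewrite subrr]. Qed.

Lemma A_pure : pure_in A (fun _ => True).
Proof.
split => // m n Am b Ab [x [_ hx]].
have [|y [Ay hy]] := @solve 0%N m n Am b Ab.
  by exists x => i /=; apply/eqE.
by exists y; split => // i; apply/eqE; apply: hy.
Qed.

Definition M0 y := A y /\ M2 y.

Lemma M0_sub : is_submod M0.
Proof.
case: A_sub => A0 Ah; case: Hp2 => -[B0 Bh] _.
by split => // a x y [] ? ? [] ? ?; split; auto.
Qed.

Lemma M0_pure : pure_in M0 (fun _ => True).
Proof.
split => // m n Am b M0b [x [_ hx]].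
case: Hp2 => _ [_ p2].
have [x' [M2x' hx']] := p2 m n Am b (fun i => (M0b i).2) (ex_intro _ x (conj (fun _ => I) hx)).
have [|y [Ay [M2y hy]]] := @solve 1%N m n Am b (fun i => (M0b i).1).
  by exists x' => /=; split => // i; apply/eqE.
by exists y; split => [j|i]; [split|apply/eqE; apply: hy].
Qed.

Lemma M1_A_pure : pure_in M1 A.
Proof.
split; first exact: M1_A.
move=> m n Am b M1b [x [_ hx]].
case: Hp1 => _ [_ p1]; apply: p1 => //; by exists x.
Qed.

Lemma sumB (n : nat) (c : 'I_n -> R) (x y : 'I_n -> N) :
  \sum_(j < n) c j *: (x j - y j) = \sum_(j < n) c j *: x j - \sum_(j < n) c j *: y j.
Proof. by rewrite -sumrB; apply: eq_bigr => j _; rewrite scalerBr. Qed.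

Lemma sumD (n : nat) (c : 'I_n -> R) (x y : 'I_n -> N) :
  \sum_(j < n) c j *: (x j + y j) = \sum_(j < n) c j *: x j + \sum_(j < n) c j *: y j.
Proof. by rewrite -big_split; apply: eq_bigr => j _; rewrite scalerDr. Qed.

Lemma sum_pure : pure_in (fun y => exists a b, A a /\ M2 b /\ y = a + b) (fun _ => True).
Proof.
split => // m n Am b Sb [x [_ hx]].
have [a Ha] := ClassicalEpsilon.choice (fun i a => exists mm, A a /\ M2 mm /\ b i = a + mm) Sb.
have [mm Hm] := ClassicalEpsilon.choice (fun i mm => A (a i) /\ M2 mm /\ b i = a i + mm) Ha.
have [|y [Ay hy]] := @solve 2%N m n Am a (fun i => (Hm i).1).
  exists x => i /=; rewrite hx (Hm i).2.2 [a i + _]addrC addrK; exact: (Hm i).2.1.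
pose p i := b i - \sum_(j < n) Am i j *: y j.
have M2p : forall i, M2 (p i).
  move=> i; have -> : p i = mm i - (\sum_(j < n) Am i j *: y j - a i).
    by rewrite /p (Hm i).2.2 opprB addrA (addrC (a i)).
  by apply: sub_closed; [case: Hp2| exact: (Hm i).2.1| exact: hy].
case: Hp2 => _ [_ p2].
have [|z [M2z hz]] := p2 m n Am p M2p.
  by exists (fun j => x j - y j); split => // i; rewrite sumB hx.
exists (fun j => y j + z j); split.
  by move=> j; exists (y j), (z j).
by move=> i; rewrite sumD hz /p addrC subrK.
Qed.

Lemma indep1 : forall a a' b b', A a -> A a' -> M2 b -> M2 b' ->
     a + b = a' + b' -> exists m, M0 m /\ a - a' = m /\ b - b' = - m.
Proof.
move=> a a' b b' Aa Aa' Bb Bb' e.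
have e1 : a - a' = b' - b.
  by rewrite -[a](addrK b) e [a' + b']addrC addrAC addrK.
exists (a - a'); split; last by rewrite e1 opprB.
split; first exact: sub_closed A_sub Aa Aa'.
by rewrite e1; apply: sub_closed => //; case: Hp2.
Qed.

End Mod.

Section Enc.
Variables (R : pzRingType) (N : lmodType R) (M1 : N -> Prop).
Let X := ({x : N | M1 x} + R + nat)%type.
Variables (P : X -> X -> X) (Pinj : forall a b a' b', P a b = P a' b' -> a = a' /\ b = b').
Let io (n : nat) : X := inr n.

Fixpoint encL (s : seq R) : X :=
  match s with
  | [::] => P (io 0) (io 0)
  | r :: s => P (io 1) (P (inl (inr r)) (encL s))
  end.

Fixpoint enc (c : code M1) : X :=
  match c with
  | CBase x => P (io 0) (inl (inl x))
  | CLin r c1 c2 => P (io 1) (P (inl (inr r)) (P (enc c1) (enc c2)))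
  | CNil => P (io 2) (io 0)
  | CCons c1 c2 => P (io 3) (P (enc c1) (enc c2))
  | CWit k mat n args j => P (io 4) (P (io k) (P (encL mat) (P (io n) (P (enc args) (io j)))))
  end.

Lemma encL_inj : injective encL.
Proof.
elim => [|r s IH] [|r' s'] //=.
- by move/Pinj => [[]].
- by move/Pinj => [[]].
- by move/Pinj => [_ /Pinj [[->]] /IH ->].
Qed.

Lemma enc_inj : injective enc.
Proof.
elim => [x|r c1 IH1 c2 IH2| |c1 IH1 c2 IH2|k mat n args IHa j] [x'|r' c1' c2'| |c1' c2'|k' mat' n' args' j'] //=;
  move/Pinj => [e1 e2]; try discriminate e1; move: e2.
- by case=> ->.
- by move=> /Pinj [[->]] /Pinj [/IH1 -> /IH2 ->].
- by move=> /Pinj [/IH1 -> /IH2 ->].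
all: first [ by case=> ->
  | by move=> /Pinj [[->]] /Pinj [/IH1 -> /IH2 ->]
  | by move=> /Pinj [/IH1 -> /IH2 ->]
  | by move=> /Pinj [[->]] /Pinj [/encL_inj ->] /Pinj [[->]] /Pinj [/IHa ->] [->] ].
Qed.
End Enc.

Theorem theorem4p9 (R : pzRingType) (K : lmodType R -> Prop)
  (HAEC : is_AEC K) (Hdsum : closed_dsum K) (Hpsub : closed_puresub K)
  (Hpepi : closed_pureepi K)
  (N : lmodType R) (M1 M2 : N -> Prop)
  (HN : K N) (HK1 : K_sub K M1) (HK2 : K_sub K M2)
  (Hp1 : pure_sub M1) (Hp2 : pure_sub M2) :
  exists M1' M0 : N -> Prop,
    K_sub K M1' /\ K_sub K M0 /\
    is_submod M0 /\ pure_in M0 M1' /\ pure_sub M1' /\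
    pure_in M0 M2 /\
    pure_in M1 M1' /\
    (exists h : {x | M0 x} -> ({x | M1 x} + R + nat)%type, injective h) /\
    indep M0 M1' M2.
Proof.
have pA : pure_sub (A M1 M2) by split; [exact: A_sub | exact: A_pure].
have pM0 : pure_sub (M0 M1 M2) by split; [exact: M0_sub | exact: M0_pure].
exists (A M1 M2), (M0 M1 M2).
split; first exact: Hpsub.
split; first exact: Hpsub.
split; first exact: M0_sub.
split; first by apply: pure_in_mono; [exact: M0_pure | move=> x []].
split; first exact: pA.
split; first by apply: pure_in_mono; [exact: M0_pure | move=> x []].
split; first exact: M1_A_pure.
split; last first.
  split; last exact: sum_pure.
  exact: indep1.
have [P Pinj] := @pairing ({x | M1 x} + R + nat)%type inr (fun a b (e : inr a = inr b) => ltac:(by case: e)).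
pose code_of (x : {x | M0 M1 M2 x}) : code M1 :=
  epsilon (inhabits (@CNil _ _ M1)) (fun c => sval x = head 0 (ev M2 c)).
have code_ofP : forall x, sval x = head 0 (ev M2 (code_of x)).
  move=> x; apply: (epsilon_spec (inhabits (@CNil _ _ M1)) (fun c => sval x = head 0 (ev M2 c))).
  by case: x => y [[c e] b] /=; exists c.
exists (fun x => enc P (code_of x)) => x y /(enc_inj Pinj) e.
have := code_ofP x; rewrite e -code_ofP.
case: x y {e} => x px [y py] /= exy; subst y.
by rewrite (boolp.Prop_irrelevance px py).
Qed.
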